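(* Let $X$ be a real Hilbert space, $A,B\colon X\rightrightarrows X$ maximally monotone, $T:=\operatorname{Id}-J_A+J_BR_A$, $v:=P_{\overline{\operatorname{ran}}(\operatorname{Id}-T)}(0)$, $D:=\operatorname{dom}A-\operatorname{dom}B$, $R:=\operatorname{ran}A+\operatorname{ran}B$, $v_D:=P_{\overline D}(0)$, $v_R:=P_{\overline R}(0)$, and assume $\overline{\operatorname{ran}}(\operatorname{Id}-T)=\overline{D\cap R}=\overline D\cap\overline R$. Let $x\in X$. Then as $n\to\infty$: (i) $\|J_AT^nx-J_AT^{n+1}x\|^2+\|J_{A^{-1}}T^nx-J_{A^{-1}}T^{n+1}x\|^2\to\|v\|^2=\|v_D\|^2+\|v_R\|^2$; (ii) $J_AT^nx-J_AT^{n+1}x\to v_R$; (iii) $J_{A^{-1}}T^nx-J_{A^{-1}}T^{n+1}x\to v_D$.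
   Context: $J_C:=(\operatorname{Id}+C)^{-1}$, $R_C:=2J_C-\operatorname{Id}$ for maximally monotone $C$; $P_S$ is the projection onto a nonempty closed convex set $S$; convergence is in norm. *)

(* Defs.v *)
From HB Require Import structures.
From mathcomp Require Import all_boot all_order all_algebra.
From mathcomp Require Import all_classical all_reals all_analysis.
Set Implicit Arguments. Unset Strict Implicit. Unset Printing Implicit Defensive.
Import Order.TTheory GRing.Theory Num.Theory.
Import numFieldNormedType.Exports.
Local Open Scope classical_set_scope.
Local Open Scope ring_scope.

Section Hilbert.
Variables (R : realType) (X : completeNormedModType R).

(* ip is an inner product on X inducing its norm: X is then a real Hilbert space *)
Definition is_inner_product (ip : X -> X -> R) : Prop :=
  (forall x y, ip x y = ip y x) /\
  (forall (a : R) x y z, ip (a *: x + y) z = a * ip x z + ip y z) /\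
  (forall x, ip x x = `|x| ^+ 2).

(* set-valued operators X ⇉ X, given by their graph *)
Definition monotone (ip : X -> X -> R) (A : X -> set X) : Prop :=
  forall x y u w, A x u -> A y w -> 0 <= ip (x - y) (u - w).

Definition maximally_monotone (ip : X -> X -> R) (A : X -> set X) : Prop :=
  monotone ip A /\
  forall B : X -> set X, monotone ip B -> (forall x u, A x u -> B x u) ->
    forall x u, B x u -> A x u.

Definition op_inv (A : X -> set X) : X -> set X := fun u x => A x u.
Definition dom (A : X -> set X) : set X := [set x | exists u, A x u].
Definition ran (A : X -> set X) : set X := [set u | exists x, A x u].

(* J_C x = (Id + C)^{-1} x : the (unique, for C max. monotone) p with x - p ∈ C p *)
Definition resolvent (C : X -> set X) (x : X) : X := xget 0 [set p | C p (x - p)].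
Definition reflected (C : X -> set X) (x : X) : X := 2%:R *: resolvent C x - x.

Definition proj_set (S : set X) (z : X) : X :=
  xget 0 [set p | S p /\ forall q, S q -> `|z - p| <= `|z - q|].

Definition DR_T (A B : X -> set X) (x : X) : X :=
  x - resolvent A x + resolvent B (reflected A x).

Definition setdiffM (S1 S2 : set X) : set X := [set z | exists a b, S1 a /\ S2 b /\ z = a - b].
Definition setsumM (S1 S2 : set X) : set X := [set z | exists a b, S1 a /\ S2 b /\ z = a + b].

End Hilbert.

(* Main.v *)
Require Import Defs.
From HB Require Import structures.
From mathcomp Require Import all_boot all_order all_algebra.
From mathcomp Require Import all_classical all_reals all_analysis.
From mathcomp Require Import ring lra.
Import Order.TTheory GRing.Theory Num.Theory.
Import numFieldNormedType.Exports.
Local Open Scope classical_set_scope.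
Local Open Scope ring_scope.

Set Implicit Arguments. Unset Strict Implicit.



Section IP.
Variables (R : realType) (X : completeNormedModType R) (ip : X -> X -> R).
Hypothesis Hip : is_inner_product ip.

Lemma ipC x y : ip x y = ip y x.
Proof. by case: Hip. Qed.
Lemma ipxx x : ip x x = `|x| ^+ 2.
Proof. by case: Hip => _ []. Qed.
Lemma ip_lin a x y z : ip (a *: x + y) z = a * ip x z + ip y z.
Proof. by case: Hip => _ [] H _; apply: H. Qed.
Lemma ip0l z : ip 0 z = 0.
Proof.
have := ip_lin 1 0 0 z; rewrite scaler0 addr0 mul1r => H; lra.
Qed.
Lemma ipDl x y z : ip (x + y) z = ip x z + ip y z.
Proof. by rewrite -[x in LHS]scale1r ip_lin mul1r. Qed.
Lemma ipZl a x z : ip (a *: x) z = a * ip x z.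
Proof. by rewrite -[a *: x]addr0 ip_lin ip0l addr0. Qed.
Lemma ipNl x z : ip (- x) z = - ip x z.
Proof. by rewrite -scaleN1r ipZl mulN1r. Qed.
Lemma ipBl x y z : ip (x - y) z = ip x z - ip y z.
Proof. by rewrite ipDl ipNl. Qed.
Lemma ip0r z : ip z 0 = 0.
Proof. by rewrite ipC ip0l. Qed.
Lemma ipDr x y z : ip z (x + y) = ip z x + ip z y.
Proof. by rewrite ipC ipDl !(ipC z). Qed.
Lemma ipZr a x z : ip z (a *: x) = a * ip z x.
Proof. by rewrite ipC ipZl ipC. Qed.
Lemma ipNr x z : ip z (- x) = - ip z x.
Proof. by rewrite ipC ipNl ipC. Qed.
Lemma ipBr x y z : ip z (x - y) = ip z x - ip z y.
Proof. by rewrite ipDr ipNr. Qed.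

Definition ipE := (ipDl, ipDr, ipBl, ipBr, ipNl, ipNr, ipZl, ipZr, ip0l, ip0r).

Lemma ipxx_ge0 x : 0 <= ip x x.
Proof. by rewrite ipxx sqr_ge0. Qed.

Lemma ip_le x y : 2 * ip x y <= ip x x + ip y y.
Proof.
have := ipxx_ge0 (x - y); rewrite !ipE (ipC y x); lra.
Qed.

Lemma CS x y : ip x y <= `|x| * `|y|.
Proof.
have [->|y0] := eqVneq y 0; first by rewrite ip0r normr0 mulr0.
have ny : 0 < `|y| by rewrite normr_gt0.
have H : 0 <= ip (ip y y *: x - ip x y *: y) (ip y y *: x - ip x y *: y) by apply: ipxx_ge0.
move: H; rewrite !ipE (ipC y x) => H.
have H2 : ip x y ^+ 2 <= (`|x| * `|y|) ^+ 2.
  have hy : 0 < ip y y by rewrite ipxx exprn_gt0.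
  rewrite exprMn -!ipxx; nra.
have hb : 0 <= `|x| * `|y| by rewrite mulr_ge0.
move: H2 hb; set a := ip x y; set b := `|x| * `|y| => H2 hb; nra.
Qed.

End IP.

Ltac genip ip := repeat match goal with |- context [ip ?a ?b] =>
  let t := fresh "t" in move: (ip a b) => t end.
Ltac ipnorm Hip ip := repeat match goal with |- context [ip ?a ?b] =>
  tryif constr_eq a b then fail else
  (match goal with |- context [ip b a] => rewrite (ipC Hip b a) end) end.
Ltac ipexp Hip ip := rewrite ?(ipE Hip); ipnorm Hip ip; genip ip.



Section An.
Variables (R : realType) (X : completeNormedModType R).

Lemma closureP_norm (S : set X) z :
  closure S z <-> forall e : R, 0 < e -> exists s, S s /\ `|z - s| < e.
Proof.
split.
- move=> Hc e e0.
  have : nbhs z (ball z e) by apply: nbhsx_ballx.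
  move=> /Hc [s [Ss Bs]]; exists s; split => //.
  by move: Bs; rewrite -ball_normE /ball_.
- move=> H B /nbhs_ballP [e /= e0 HB].
  have [s [Ss Hs]] := H e e0.
  exists s; split => //; apply: HB.
  by rewrite -ball_normE /ball_.
Qed.

Lemma cvg_le_cst (u : nat -> R) a b :
  u @ \oo --> a -> (forall n, u n <= b) -> a <= b.
Proof.
move=> Hu Hb.
have := @limr_le _ _ _ _ b u (cvgP _ Hu).
rewrite (cvg_lim _ Hu) //; apply; exact: nearW.
Qed.

End An.


Section An2.
Variables (R : realType) (X : completeNormedModType R) (ip : X -> X -> R).
Hypothesis Hip : is_inner_product ip.

Lemma polar a b : ip a b = (`|a + b| * `|a + b| - `|a - b| * `|a - b|) / 4.
Proof.
rewrite -!expr2 -!(ipxx Hip) !(ipE Hip) (ipC Hip b a).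
by field.
Qed.

Lemma ip_cvg (u v : nat -> X) a b :
  u @ \oo --> a -> v @ \oo --> b -> (fun n => ip (u n) (v n)) @ \oo --> ip a b.
Proof.
move=> Hu Hv.
rewrite polar.
have -> : (fun n => ip (u n) (v n)) = (fun n =>
   (`|u n + v n| * `|u n + v n| - `|u n - v n| * `|u n - v n|) / 4).
  by apply: funext => n; rewrite polar.
have H1 : (fun n => u n + v n) @ \oo --> a + b by apply: cvgD.
have H2 : (fun n => u n - v n) @ \oo --> a - b by apply: cvgB.
apply: cvgM; last exact: cvg_cst.
apply: cvgB; apply: cvgM; exact: cvg_norm.
Qed.

End An2.


Section MS.
Variables (R : realType) (X : completeNormedModType R).

Lemma inv_small (e : R) : 0 < e -> exists N : nat, forall n, (N <= n)%N -> n.+1%:R^-1 < e.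
Proof.
move=> e0; exists (Num.trunc e^-1) => n Hn.
have h1 := truncnS_gt e^-1.
have h2 : (Num.trunc e^-1).+1%:R <= n.+1%:R :> R by rewrite ler_nat ltnS.
have h3 : e^-1 < n.+1%:R by exact: lt_le_trans h1 h2.
rewrite -(invrK e) ltf_pV2 ?posrE ?invr_gt0 //.
Qed.

Lemma maxseq (M : Type) (H : M -> Prop) (psi : M -> R) (c : M -> X) (B : R) :
  (exists m, H m) -> (forall m, H m -> psi m <= B) ->
  (forall m1 m2, H m1 -> H m2 -> exists m, H m /\
      (psi m1 + psi m2) / 2 + `|c m1 - c m2| ^+ 2 / 4 <= psi m) ->
  exists (s : R) (f : nat -> M) (p : X),
    [/\ (forall m, H m -> psi m <= s), (forall n, H (f n)),
      (forall n, s - n.+1%:R^-1 < psi (f n)) & (fun n => c (f n)) @ \oo --> p].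
Proof.
move=> [m0 Hm0] HB Hmid.
pose S := [set y | exists m, H m /\ psi m = y].
have hS : has_sup S.
  split; first by exists (psi m0), m0.
  by exists B => y [m [Hm <-]]; apply: HB.
set s := sup S.
have Hs : forall m, H m -> psi m <= s.
  by move=> m Hm; apply: sup_upper_bound => //; exists m.
have Hex : forall n : nat, exists m, H m /\ s - n.+1%:R^-1 < psi m.
  move=> n.
  have [e [m [Hm <-]] He] := @sup_adherent _ S (n.+1%:R^-1) ltac:(by rewrite invr_gt0) hS.
  by exists m.
have [f Hf] := choice Hex.
have Hcau : forall n k, `|c (f n) - c (f k)| ^+ 2 < 2 * (n.+1%:R^-1 + k.+1%:R^-1).
  move=> n k.
  have [m [Hm Hle]] := Hmid _ _ (proj1 (Hf n)) (proj1 (Hf k)).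
  have := Hs _ Hm; have := proj2 (Hf n); have := proj2 (Hf k).
  move: Hle; move: (n.+1%:R^-1) (k.+1%:R^-1) => a b; lra.
have Hc : cvg ((fun n => c (f n)) @ \oo).
  apply: cauchy_cvg; apply: cauchy_exP => e e0.
  have e20 : 0 < e ^+ 2 / 4 by rewrite divr_gt0 ?exprn_gt0.
  have [N HN] := inv_small e20.
  exists (c (f N)); exists N => // n /= Hn.
  rewrite -ball_normE /ball_ /=.
  have h1 := HN n Hn; have h2 := HN N (leqnn N).
  have h3 := Hcau N n.
  have h4 : `|c (f N) - c (f n)| ^+ 2 < e ^+ 2.
    move: h1 h2 h3; move: (n.+1%:R^-1) (N.+1%:R^-1) => a b; lra.
  have hn := normr_ge0 (c (f N) - c (f n)); move: h4 hn; set z := `|_|; nra.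
by exists s, f, (lim ((fun n => c (f n)) @ \oo)); split => // n; case: (Hf n).
Qed.

End MS.


Lemma small_t (R : realType) (x y : R) : (forall t, 0 < t <= 1 -> x <= t * y) -> x <= 0.
Proof.
move=> H; rewrite leNgt; apply/negP => x0.
have [y0|y0] := lerP y 0.
  have := H 1 ltac:(by rewrite ltr01 lexx); rewrite mul1r; lra.
have xy : 0 < x + y by lra.
have t0 : 0 < x / (x + y) by rewrite divr_gt0.
have t1 : x / (x + y) <= 1 by rewrite ler_pdivrMr // mul1r; lra.
have := H (x / (x + y)); rewrite t0 t1 => /(_ isT).
rewrite mulrAC ler_pdivlMr //; nra.
Qed.

Section Proj.
Variables (R : realType) (X : completeNormedModType R) (ip : X -> X -> R).
Hypothesis Hip : is_inner_product ip.

Definition cvxset (S : set X) := forall x y (t : R), S x -> S y -> 0 <= t <= 1 ->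
  S ((1 - t) *: x + t *: y).

Lemma cvg_le_harm (u : nat -> R) a b :
  u @ \oo --> a -> (forall n, u n <= b + n.+1%:R^-1) -> a <= b.
Proof.
move=> Hu Hb.
have Hh : (fun n => u n - n.+1%:R^-1) @ \oo --> a - 0.
  apply: cvgB => //; exact: cvg_harmonic.
rewrite -(subr0 a); apply: (cvg_le_cst Hh) => n; have := Hb n; move: (n.+1%:R^-1) => c; lra.
Qed.

Lemma proj_exists (S : set X) : closed S -> cvxset S -> S !=set0 ->
  exists p, S p /\ forall q, S q -> `|p| <= `|q|.
Proof.
move=> cS vS [q0 Sq0].
have := @maxseq R X X S (fun q => - `|q| ^+ 2) id 0 (ex_intro _ q0 Sq0).
case.
- by move=> m _; rewrite oppr_le0 sqr_ge0.
- move=> m1 m2 H1 H2; exists ((1 - 2^-1) *: m1 + 2^-1 *: m2); split.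
    by apply: vS => //; rewrite invr_ge0 ler0n /= invf_le1 ?ler1n.
  rewrite -!(ipxx Hip) !(ipE Hip) (ipC Hip m2 m1).
  have -> : 1 - 2^-1 = 2^-1 :> R by field.
  set a := ip m1 m1; set b := ip m1 m2; set c := ip m2 m2.
  have -> : 2^-1 = (2 : R) / 4 by field.
  lra.
move=> s [f [p [Hs Hf Hfs Hc]]].
exists p; split.
  by apply: (closed_cvg _ cS _ _ Hc); exact: nearW.
move=> q Sq.
have Hp2 : (fun n => ip (f n) (f n)) @ \oo --> ip p p by apply: ip_cvg.
have : ip p p <= - s.
  apply: (cvg_le_harm Hp2) => n; have := Hfs n; rewrite (ipxx Hip).
  move: (n.+1%:R^-1) => a; lra.
have := Hs q Sq; rewrite (ipxx Hip) => h1 h2.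
have h3 : `|p| ^+ 2 <= `|q| ^+ 2 by lra.
by rewrite -ler_sqr ?nnegrE.
Qed.

Lemma proj_char (S : set X) p : cvxset S -> S p -> (forall q, S q -> `|p| <= `|q|) ->
  forall q, S q -> `|p| ^+ 2 <= ip p q.
Proof.
move=> vS Sp Hmin q Sq.
have H : forall t : R, 0 < t <= 1 -> 2 * (ip p p - ip p q) <= t * (ip p p - 2 * ip p q + ip q q).
  move=> t /andP [t0 t1].
  have Sz := vS _ _ t Sp Sq ltac:(by rewrite ltW).
  have := Hmin _ Sz.
  rewrite -ler_sqr ?nnegrE // -!(ipxx Hip) !(ipE Hip) (ipC Hip q p).
  set a := ip p p; set b := ip p q; set c := ip q q => h.
  have h2 : 0 <= t * (2 * b - 2 * a + t * (a - 2 * b + c)) by nra.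
  rewrite pmulr_rge0 // in h2; nra.
have := small_t H; rewrite (ipxx Hip); lra.
Qed.

End Proj.


Section Minty.
Variables (R : realType) (X : completeNormedModType R) (ip : X -> X -> R).
Hypothesis Hip : is_inner_product ip.
Variable G : X -> X -> Prop.
Hypothesis Gmono : forall q w q' w', G q w -> G q' w' -> 0 <= ip (q - q') (w - w').

Inductive hull : X -> X -> R -> Prop :=
| hgen q w : G q w -> hull q w (ip q w)
| hcomb (t : R) Q1 W1 s1 Q2 W2 s2 : 0 <= t <= 1 -> hull Q1 W1 s1 -> hull Q2 W2 s2 ->
    hull ((1 - t) *: Q1 + t *: Q2) ((1 - t) *: W1 + t *: W2) ((1 - t) * s1 + t * s2).

Lemma cross_gen q w Q W s : G q w -> hull Q W s -> 0 <= ip q w + s - ip q W - ip Q w.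
Proof.
move=> Gqw; elim.
- move=> q' w' G'; have := Gmono Gqw G'; rewrite !(ipE Hip); lra.
- move=> t Q1 W1 s1 Q2 W2 s2 /andP [t0 t1] _ h1 _ h2.
  rewrite !(ipE Hip); nra.
Qed.

Lemma cross Q1 W1 s1 Q2 W2 s2 : hull Q1 W1 s1 -> hull Q2 W2 s2 ->
  0 <= s1 + s2 - ip Q1 W2 - ip Q2 W1.
Proof.
move=> h1 h2; elim: h1.
- move=> q w Gqw; exact: cross_gen.
- move=> t Q W s Q' W' s' /andP [t0 t1] _ h1 _ h2'.
  rewrite !(ipE Hip); nra.
Qed.

Lemma minty_core : (exists q w, G q w) ->
  exists p, forall q w, G q w -> ip (p - q) (p + w) <= 0.
Proof.
move=> [q0 [w0 G0]].
pose H := fun m : X * X * R => hull m.1.1 m.1.2 m.2.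
pose cc := fun m : X * X * R => 2^-1 *: (m.1.1 - m.1.2).
pose psi := fun m : X * X * R => - ip (cc m) (cc m) - m.2.
have psi0 : forall m, H m -> psi m <= 0.
  move=> [[Q W] s] Hm; rewrite /H /= in Hm; rewrite /psi /cc /=.
  have := cross Hm Hm.
  have := ipxx_ge0 Hip (Q + W).
  rewrite !(ipE Hip) (ipC Hip W Q).
  move=> h1 h2; lra.
have := @maxseq R X _ H psi cc 0 (ex_intro _ (q0, w0, ip q0 w0) (hgen G0)).
case; first exact: psi0.
- move=> [[Q1 W1] s1] [[Q2 W2] s2]; rewrite /H /= => h1 h2.
  exists ((1 - 2^-1) *: Q1 + 2^-1 *: Q2, (1 - 2^-1) *: W1 + 2^-1 *: W2, (1 - 2^-1) * s1 + 2^-1 * s2).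
  split.
    by apply: hcomb => //; rewrite invr_ge0 ler0n /= invf_le1 ?ler1n.
  rewrite /psi /cc /= -(ipxx Hip) !(ipE Hip).
  rewrite ?(ipC Hip W1 Q1) ?(ipC Hip W2 Q2) ?(ipC Hip Q2 Q1) ?(ipC Hip W2 W1)
          ?(ipC Hip W1 Q2) ?(ipC Hip W2 Q1).
  have -> : 1 - 2^-1 = 2^-1 :> R by field.
  lra.
move=> s [f [p [Hs Hf Hfs Hc]]].
have sle0 : s <= 0.
  apply: (cvg_le_harm (cvg_cst s)) => n.
  have := Hfs n; have := psi0 _ (Hf n); move: (n.+1%:R^-1) => h; lra.
exists p => q w Gqw.
pose cg := 2^-1 *: (q - w).
have key : forall t : R, 0 < t <= 1 -> forall n,
    t * (ip (cc (f n) - q) (cc (f n) + w) - t * ip (cc (f n) - cg) (cc (f n) - cg))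
      <= 0 + n.+1%:R^-1.
  move=> t /andP [t0 t1] n.
  move: (Hf n) (Hfs n); case: (f n) => [[Q W] s0]; rewrite /H /= => Hn Hsn.
  have Hm := hcomb (ltac:(by rewrite (ltW t0) t1) : 0 <= t <= 1) Hn (hgen Gqw).
  have := Hs (_, _, _) Hm; rewrite /psi /cc /cg /=.
  move: Hsn; rewrite /psi /cc /=.
  rewrite !(ipE Hip).
  rewrite ?(ipC Hip W Q) ?(ipC Hip q Q) ?(ipC Hip w Q) ?(ipC Hip q W) ?(ipC Hip w W) ?(ipC Hip w q).
  have hh0 : 0 <= n.+1%:R^-1 :> R by rewrite invr_ge0.
  move: (n.+1%:R^-1) hh0 => h hh h1 h2.
  have := ltW h1; rewrite -subr_ge0 => h1'.
  have hA := mulr_ge0 (ltac:(by rewrite subr_ge0) : 0 <= 1 - t) h1'.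
  have hB : t * s <= 0 by rewrite mulr_ge0_le0 // ltW.
  have hC : 0 <= t * h by rewrite mulr_ge0 // ltW.
  lra.
apply: (small_t (y := ip (p - cg) (p - cg))) => t /andP [t0 t1].
have Hu : (fun n => t * (ip (cc (f n) - q) (cc (f n) + w)
            - t * ip (cc (f n) - cg) (cc (f n) - cg))) @ \oo -->
          t * (ip (p - q) (p + w) - t * ip (p - cg) (p - cg)).
  apply: cvgM; first exact: cvg_cst.
  apply: cvgB.
    apply: (ip_cvg Hip); [apply: cvgB => //; exact: cvg_cst|apply: cvgD => //; exact: cvg_cst].
  apply: cvgM; first exact: cvg_cst.
  apply: (ip_cvg Hip); apply: cvgB => //; exact: cvg_cst.
have := cvg_le_harm Hu (key t (ltac:(by rewrite t0 t1))).
set F := ip (p - q) (p + w); set d := ip (p - cg) (p - cg) => h.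
have : 0 <= t * (t * d - F) by lra.
rewrite pmulr_rge0 //; lra.
Qed.
End Minty.


Lemma small_lam (R : realType) (e C : R) : 0 < e -> 0 <= C ->
  exists lam, 0 < lam <= 1 /\ lam * C < e.
Proof.
move=> e0 C0; exists (e / (e + C + 1)).
have h : 0 < e + C + 1 by lra.
rewrite divr_gt0 //= ler_pdivrMr // mul1r.
split; first lra.
rewrite mulrAC ltr_pdivrMr //; nra.
Qed.


Section Ops.
Variables (R : realType) (X : completeNormedModType R) (ip : X -> X -> R).
Hypothesis Hip : is_inner_product ip.

Lemma graph_nonempty A : maximally_monotone ip A -> exists x u, A x u.
Proof.
move=> [Am Amax]; apply: contrapT => Hn.
have : A 0 0.
  apply: (Amax (fun x u => x = 0 /\ u = 0)); last by [].
  - by move=> x y u w [-> ->] [-> ->]; rewrite subr0 ip0l.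
  - by move=> x u Axu; exfalso; apply: Hn; exists x, u.
by move=> A00; apply: Hn; exists 0, 0.
Qed.

Lemma minty A (lam : R) z : maximally_monotone ip A -> 0 < lam ->
  exists p, A p (lam^-1 *: (z - p)).
Proof.
move=> [Am Amax] l0.
pose G := fun q w => exists u, A q u /\ w = lam *: u - z.
have Gm : forall q w q' w', G q w -> G q' w' -> 0 <= ip (q - q') (w - w').
  move=> q w q' w' [u [Au ->]] [u' [Au' ->]].
  have -> : lam *: u - z - (lam *: u' - z) = lam *: (u - u') by rewrite scalerBr opprB addrA subrK.
  rewrite (ipZr Hip); apply: mulr_ge0; [exact: ltW | exact: Am Au Au'].
have [q0 [u0 A0]] := graph_nonempty (conj Am Amax).
have [p Hp] := minty_core Hip Gm (ex_intro _ q0 (ex_intro _ (lam *: u0 - z) (ex_intro _ u0 (conj A0 erefl)))).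
exists p.
apply: (Amax (fun x u => A x u \/ (x = p /\ u = lam^-1 *: (z - p)))); last by right.
- have E : forall u, u - lam^-1 *: (z - p) = lam^-1 *: (lam *: u - (z - p)).
    by move=> u; rewrite [RHS]scalerBr scalerA mulVf ?lt0r_neq0 // scale1r.
  move=> x y u w [Axu|[-> ->]] [Ayw|[-> ->]].
  + exact: Am.
  + have := Hp x (lam *: u - z) (ex_intro _ u (conj Axu erefl)).
    move=> h; rewrite E (ipZr Hip); apply: mulr_ge0; first by rewrite invr_ge0 ltW.
    move: h; rewrite !(ipE Hip).
    genip ip; lra.
  + have := Hp y (lam *: w - z) (ex_intro _ w (conj Ayw erefl)).
    move=> h; rewrite -[lam^-1 *: (z - p) - w]opprB (ipNr Hip) E (ipZr Hip).
    rewrite -mulrN; apply: mulr_ge0; first by rewrite invr_ge0 ltW.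
    move: h; rewrite !(ipE Hip); genip ip; lra.
  + by rewrite subrr ip0l.
- by move=> x u Axu; left.
Qed.

End Ops.



Section Ops2.
Variables (R : realType) (X : completeNormedModType R) (ip : X -> X -> R).
Hypothesis Hip : is_inner_product ip.

Lemma res_unique A x p1 p2 : Defs.monotone ip A -> A p1 (x - p1) -> A p2 (x - p2) -> p1 = p2.
Proof.
move=> Am h1 h2; have h0 := Am _ _ _ _ h1 h2.
have h3 := ipxx_ge0 Hip (p1 - p2).
have : ip (p1 - p2) (p1 - p2) = 0.
  move: h0 h3; ipexp Hip ip; lra.
rewrite (ipxx Hip) => /eqP; rewrite sqrf_eq0 normr_eq0 subr_eq0 => /eqP //.
Qed.

Lemma res_spec A x : maximally_monotone ip A -> A (resolvent A x) (x - resolvent A x).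
Proof.
move=> Amm; rewrite /resolvent.
case: xgetP => //= Hn.
have [p Hp] := minty Hip x Amm ltr01.
by exfalso; apply: (Hn p) => /=; rewrite invr1 scale1r in Hp.
Qed.

Lemma op_inv_mm A : maximally_monotone ip A -> maximally_monotone ip (op_inv A).
Proof.
move=> [Am Amax]; split.
  by move=> x y u w h1 h2; rewrite (ipC Hip); apply: Am.
move=> B Bm HB x u Bxu.
apply: (Amax (op_inv B)).
- by move=> x' y' u' w' h1 h2; rewrite (ipC Hip); apply: Bm.
- by move=> x' u' h; apply: HB.
- exact: Bxu.
Qed.

Lemma res_inv A x : maximally_monotone ip A ->
  resolvent (op_inv A) x = x - resolvent A x.
Proof.
move=> Amm; have Am := Amm.1.
have h := res_spec x Amm.
rewrite {1}/resolvent; case: xgetP => /= [p _ Hp|Hn].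
  have e : x - p = resolvent A x.
    by apply: (res_unique (x := x) Am) => //; rewrite subKr.
  by rewrite -e subKr.
exfalso; apply: (Hn (x - resolvent A x)) => /=.
by rewrite subKr.
Qed.

End Ops2.



Section Rec.
Variables (R : realType) (X : completeNormedModType R) (ip : X -> X -> R).
Hypothesis Hip : is_inner_product ip.

Lemma vec_eq (u v : X) : ip (u - v) (u - v) = 0 -> u = v.
Proof.
rewrite (ipxx Hip) => /eqP; rewrite sqrf_eq0 normr_eq0 subr_eq0 => /eqP //.
Qed.

Lemma lam_close (S : set X) z (C : R) : 0 <= C ->
  (forall lam : R, 0 < lam <= 1 -> exists s, S s /\ `|z - s| ^+ 2 <= lam * C) ->
  closure S z.
Proof.
move=> C0 H; apply/closureP_norm => e e0.
have [lam [hl hC]] := small_lam (exprn_gt0 2 e0) C0.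
have [s [Ss Hs]] := H lam hl.
exists s; split => //.
have h : `|z - s| ^+ 2 < e ^+ 2 by exact: le_lt_trans Hs hC.
have hn := normr_ge0 (z - s); move: h hn; set a := `|_|; nra.
Qed.

Lemma mono_scale (a e u : X) (lam : R) : 0 < lam ->
  0 <= ip a (lam^-1 *: e - u) -> 0 <= ip a (e - lam *: u).
Proof.
move=> l0; have -> : lam^-1 *: e - u = lam^-1 *: (e - lam *: u).
  by rewrite [RHS]scalerBr scalerA mulVf ?lt0r_neq0 // scale1r.
by rewrite (ipZr Hip) pmulr_rge0 // invr_gt0.
Qed.

Lemma conv_dom A x1 u1 x2 u2 (t : R) : maximally_monotone ip A ->
  A x1 u1 -> A x2 u2 -> 0 <= t <= 1 -> closure (dom A) ((1 - t) *: x1 + t *: x2).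
Proof.
move=> Amm h1 h2 /andP [t0 t1].
set z := (1 - t) *: x1 + t *: x2.
set U := (1 - t) *: u1 + t *: u2.
set K := (1 - t) * ip (z - x1) u1 + t * ip (z - x2) u2.
apply: (lam_close (C := ip U U + 2 * `|K|)).
  by apply: addr_ge0; [exact: ipxx_ge0 | apply: mulr_ge0].
move=> lam /andP [l0 l1].
have [p Hp] := minty Hip z Amm l0.
exists p; split; first by exists (lam^-1 *: (z - p)).
have m1 := mono_scale l0 (Amm.1 _ _ _ _ Hp h1).
have m2 := mono_scale l0 (Amm.1 _ _ _ _ Hp h2).
have k1 := mulr_ge0 (ltac:(lra) : 0 <= 1 - t) m1.
have k2 := mulr_ge0 t0 m2.
have hle := ip_le Hip (z - p) (lam *: U).
have hK : - K <= `|K| by rewrite -normrN ler_norm.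
have hK2 := ler_wpM2l (ltW l0) hK.
have hU := mulr_ge0 (ltac:(lra) : 0 <= 1 - lam) (mulr_ge0 (ltW l0) (ipxx_ge0 Hip U)).
rewrite -(ipxx Hip).
move: (`|K|) hK hK2 => k hK hK2.
move: k1 k2 hle hK hK2 hU; rewrite /K /U /z.
ipexp Hip ip.
lra.
Qed.

Lemma rec_dom A w (K : R) x0 u0 : maximally_monotone ip A ->
  (forall x u, A x u -> ip w u <= K) -> A x0 u0 -> closure (dom A) (x0 + w).
Proof.
move=> Amm HK h0.
set z := x0 + w.
apply: (lam_close (C := 2 * `|K - ip w u0| + ip u0 u0)).
  by apply: addr_ge0; [apply: mulr_ge0 | exact: ipxx_ge0].
move=> lam /andP [l0 l1].
have [p Hp] := minty Hip z Amm l0.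
exists p; split; first by exists (lam^-1 *: (z - p)).
have m := mono_scale l0 (Amm.1 _ _ _ _ Hp h0).
have hb := HK _ _ Hp; rewrite (ipZr Hip) in hb.
have := ler_wpM2l (ltW l0) hb; rewrite mulrA mulfV ?lt0r_neq0 // mul1r => hb'.
have hle := ip_le Hip (z - p) (lam *: u0).
have hK : K - ip w u0 <= `|K - ip w u0| by rewrite ler_norm.
have hK2 := ler_wpM2l (ltW l0) hK.
have hU := mulr_ge0 (ltac:(lra) : 0 <= 1 - lam) (mulr_ge0 (ltW l0) (ipxx_ge0 Hip u0)).
rewrite -(ipxx Hip).
move: (`|K - ip w u0|) hK hK2 => k hK hK2.
move: m hb' hle hK hK2 hU; rewrite /z.
ipexp Hip ip.
lra.
Qed.

Lemma closure_convex (S : set X) :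
  (forall x y (t : R), S x -> S y -> 0 <= t <= 1 -> closure S ((1 - t) *: x + t *: y)) ->
  cvxset (closure S).
Proof.
move=> H x y t cx cy /andP [t0 t1].
apply/closureP_norm => e e0.
have e30 : 0 < e / 3 by rewrite divr_gt0.
have [x1 [Sx1 hx1]] := (closureP_norm S x).1 cx _ e30.
have [y1 [Sy1 hy1]] := (closureP_norm S y).1 cy _ e30.
have cz := H _ _ t Sx1 Sy1 ltac:(by rewrite t0 t1).
have [s [Ss hs]] := (closureP_norm S _).1 cz _ e30.
exists s; split => //.
have -> : (1 - t) *: x + t *: y - s =
    ((1 - t) *: (x - x1) + t *: (y - y1)) + ((1 - t) *: x1 + t *: y1 - s).
  by apply: vec_eq; ipexp Hip ip; ring.
apply: (le_lt_trans (ler_normD _ _)).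
have h1 : `|(1 - t) *: (x - x1) + t *: (y - y1)| <= (1 - t) * `|x - x1| + t * `|y - y1|.
  apply: (le_trans (ler_normD _ _)).
  by rewrite !normrZ !ger0_norm // subr_ge0.
have h2 : (1 - t) * `|x - x1| + t * `|y - y1| <= e / 3.
  have := ler_wpM2l (ltac:(lra) : 0 <= 1 - t) (ltW hx1).
  have := ler_wpM2l t0 (ltW hy1).
  lra.
lra.
Qed.

Lemma closure_diff (S1 S2 : set X) x y : closure S1 x -> closure S2 y ->
  closure (setdiffM S1 S2) (x - y).
Proof.
move=> c1 c2; apply/closureP_norm => e e0.
have e20 : 0 < e / 2 by rewrite divr_gt0.
have [a [Sa ha]] := (closureP_norm S1 x).1 c1 _ e20.
have [b [Sb hb]] := (closureP_norm S2 y).1 c2 _ e20.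
exists (a - b); split; first by exists a, b.
have -> : x - y - (a - b) = (x - a) - (y - b).
  by apply: vec_eq; ipexp Hip ip; ring.
apply: (le_lt_trans (ler_normB _ _)); lra.
Qed.

Lemma closure_sum (S1 S2 : set X) x y : closure S1 x -> closure S2 y ->
  closure (setsumM S1 S2) (x + y).
Proof.
move=> c1 c2; apply/closureP_norm => e e0.
have e20 : 0 < e / 2 by rewrite divr_gt0.
have [a [Sa ha]] := (closureP_norm S1 x).1 c1 _ e20.
have [b [Sb hb]] := (closureP_norm S2 y).1 c2 _ e20.
exists (a + b); split; first by exists a, b.
have -> : x + y - (a + b) = (x - a) + (y - b) by rewrite opprD addrACA.
apply: (le_lt_trans (ler_normD _ _)); lra.
Qed.

End Rec.



Section DR.
Variables (R : realType) (X : completeNormedModType R) (ip : X -> X -> R).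
Hypothesis Hip : is_inner_product ip.

Lemma firm_J A x y : maximally_monotone ip A ->
  0 <= ip (resolvent A x - resolvent A y) ((x - resolvent A x) - (y - resolvent A y)).
Proof.
move=> Amm; exact: (Amm.1 _ _ _ _ (res_spec Hip x Amm) (res_spec Hip y Amm)).
Qed.

Lemma T_firm A B x y : maximally_monotone ip A -> maximally_monotone ip B ->
  `|DR_T A B x - DR_T A B y| ^+ 2 + `|(x - DR_T A B x) - (y - DR_T A B y)| ^+ 2
    <= `|x - y| ^+ 2.
Proof.
move=> Amm Bmm.
have f1 := firm_J x y Amm.
have f2 := firm_J (reflected A x) (reflected A y) Bmm.
rewrite -!(ipxx Hip) /DR_T.
move: f1 f2; rewrite /reflected.
move: (resolvent B (2%:R *: resolvent A x - x)) (resolvent B (2%:R *: resolvent A y - y))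
  (resolvent A x) (resolvent A y) => c c' a a'.
ipexp Hip ip.
lra.
Qed.

Lemma pazy (T : X -> X) :
  (forall x y, `|T x - T y| ^+ 2 + `|(x - T x) - (y - T y)| ^+ 2 <= `|x - y| ^+ 2) ->
  forall x y (e : R), 0 < e -> exists N, forall n, (N <= n)%N ->
    `|iter n T x - iter n.+1 T x| <= `|y - T y| + e.
Proof.
move=> Tf x y e e0.
have NE : forall a b, `|T a - T b| <= `|a - b|.
  move=> a b; have := Tf a b.
  have := sqr_ge0 `|(a - T a) - (b - T b)|.
  have := normr_ge0 (T a - T b); have := normr_ge0 (a - b).
  move: (`|T a - T b|) (`|a - b|) (`|(a - T a) - (b - T b)|) => p q r; nra.
pose d n := iter n T x - iter n.+1 T x.
pose w n := iter n T y - iter n.+1 T y.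
pose z n := iter n T x - iter n T y.
have dS : forall n, `|d n.+1| <= `|d n| by move=> n; exact: NE.
have dmono : forall k n, (k <= n)%N -> `|d n| <= `|d k|.
  move=> k n /subnK <-; elim: (n - k)%N => [|m IH]; first by rewrite add0n.
  by rewrite addSn; exact: le_trans (dS _) IH.
have wle : forall n, `|w n| <= `|y - T y|.
  elim => [|n IH] //; exact: le_trans (NE _ _) IH.
have zS : forall n, `|z n.+1| ^+ 2 + `|d n - w n| ^+ 2 <= `|z n| ^+ 2.
  move=> n; have := Tf (iter n T x) (iter n T y).
  have -> : d n - w n = (iter n T x - T (iter n T x)) - (iter n T y - T (iter n T y)) by [].
  by [].
have ind : forall n, (forall k, (k < n)%N -> e ^+ 2 < `|d k - w k| ^+ 2) ->
    `|z n| ^+ 2 + n%:R * e ^+ 2 <= `|z 0| ^+ 2.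
  elim => [|n IH] H; first by rewrite mul0r addr0.
  have h1 := IH (fun k hk => H k (ltnW hk)).
  have h2 := H n (ltnSn n).
  have h3 := zS n.
  rewrite -addn1 natrD mulrDl mul1r.
  move: h1 h2 h3; move: (n%:R) => nn; rewrite addn1; lra.
pose n0 := (Num.trunc (`|z 0| ^+ 2 / e ^+ 2)).+1.
have hn0 : `|z 0| ^+ 2 < n0%:R * e ^+ 2.
  have := truncnS_gt (`|z 0| ^+ 2 / e ^+ 2).
  by rewrite ltr_pdivrMr ?exprn_gt0.
have [k [hk1 hk2]] : exists k, (k < n0)%N /\ `|d k - w k| ^+ 2 <= e ^+ 2.
  apply: contrapT => Hn.
  have : `|z n0| ^+ 2 + n0%:R * e ^+ 2 <= `|z 0| ^+ 2.
    apply: ind => k hk; rewrite ltNge; apply/negP => hle; apply: Hn; by exists k.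
  have := sqr_ge0 `|z n0|; lra.
exists k => n hn.
apply: (le_trans (dmono _ _ hn)).
have hdk : `|d k - w k| <= e.
  have := normr_ge0 (d k - w k); move: hk2; move: (`|d k - w k|) => r hr h0; nra.
have : `|d k| <= `|w k| + `|d k - w k|.
  by have := ler_normD (w k) (d k - w k); rewrite [w k + _]addrC subrK.
have := wle k; lra.
Qed.
End DR.



Lemma sq_lim (R : realType) (a b : R) : 0 <= b ->
  (forall e, 0 < e -> e <= 1 -> a <= (b + e) ^+ 2) -> a <= b ^+ 2.
Proof.
move=> b0 H.
suff : a - b ^+ 2 <= 0 by lra.
apply: (small_t (y := 2 * b + 1)) => t /andP [t0 t1].
have := H t t0 t1; nra.
Qed.

Lemma cvg_from (R : realType) (V : normedModType R) (u : nat -> V) L :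
  (forall e : R, 0 < e -> exists N, forall n, (N <= n)%N -> `|L - u n| < e) ->
  u @ \oo --> L.
Proof.
move=> H; apply/cvgrPdist_lt => e e0.
have [N HN] := H e e0; exists N => // n /= hn; exact: HN.
Qed.

Section Main.
Variables (R : realType) (X : completeNormedModType R) (ip : X -> X -> R).
Hypothesis Hip : is_inner_product ip.

Lemma proj_spec (S : set X) : closed S -> cvxset S -> S !=set0 ->
  S (proj_set S 0) /\ (forall q, S q -> `|proj_set S 0| <= `|q|).
Proof.
move=> cS vS nS.
have [p [Sp Hp]] := proj_exists Hip cS vS nS.
rewrite /proj_set; case: xgetP => /= [q _ [Sq Hq]|Hn].
  by split => // r Sr; have := Hq r Sr; rewrite !sub0r !normrN.
by exfalso; apply: (Hn p); split => // r Sr; rewrite !sub0r !normrN; apply: Hp.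
Qed.

Lemma cl_shift (S : set X) z w : closure S z -> (forall s, S s -> closure S (s + w)) ->
  closure S (z + w).
Proof.
move=> cz H; apply/closureP_norm => e e0.
have e20 : 0 < e / 2 by rewrite divr_gt0.
have [s [Ss hs]] := (closureP_norm S z).1 cz _ e20.
have [s' [Ss' hs']] := (closureP_norm S _).1 (H s Ss) _ e20.
exists s'; split => //.
have -> : z + w - s' = (z - s) + (s + w - s') by apply: (vec_eq Hip); ipexp Hip ip; ring.
apply: (le_lt_trans (ler_normD _ _)); lra.
Qed.

Lemma cvx_D A B : maximally_monotone ip A -> maximally_monotone ip B ->
  cvxset (closure (setdiffM (dom A) (dom B))).
Proof.
move=> Amm Bmm; apply: (closure_convex Hip) => x y t [a1 [b1 [[u1 h1] [[w1 k1] ->]]]]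
  [a2 [b2 [[u2 h2] [[w2 k2] ->]]]] ht.
have -> : (1 - t) *: (a1 - b1) + t *: (a2 - b2) =
  ((1 - t) *: a1 + t *: a2) - ((1 - t) *: b1 + t *: b2).
  by apply: (vec_eq Hip); ipexp Hip ip; ring.
apply: (closure_diff Hip); [exact (conv_dom Hip Amm h1 h2 ht) | exact (conv_dom Hip Bmm k1 k2 ht)].
Qed.

Lemma cvx_R A B : maximally_monotone ip A -> maximally_monotone ip B ->
  cvxset (closure (setsumM (ran A) (ran B))).
Proof.
move=> Amm Bmm; apply: (closure_convex Hip) => x y t [a1 [b1 [[u1 h1] [[w1 k1] ->]]]]
  [a2 [b2 [[u2 h2] [[w2 k2] ->]]]] ht.
have -> : (1 - t) *: (a1 + b1) + t *: (a2 + b2) =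
  ((1 - t) *: a1 + t *: a2) + ((1 - t) *: b1 + t *: b2).
  by apply: (vec_eq Hip); ipexp Hip ip; ring.
apply: closure_sum.
  exact (conv_dom Hip (op_inv_mm Hip Amm) h1 h2 ht).
exact (conv_dom Hip (op_inv_mm Hip Bmm) k1 k2 ht).
Qed.

End Main.


Unset Implicit Arguments. Set Strict Implicit.


Theorem proposition5p1 (R : realType) (X : completeNormedModType R)
  (ip : X -> X -> R) (A B : X -> set X) (x : X) :
  is_inner_product ip ->
  maximally_monotone ip A -> maximally_monotone ip B ->
  let T := DR_T A B in
  let v := proj_set (closure (range (fun y => y - T y))) (0 : X) in
  let D := setdiffM (dom A) (dom B) in
  let Rg := setsumM (ran A) (ran B) in
  let vD := proj_set (closure D) (0 : X) in
  let vR := proj_set (closure Rg) (0 : X) in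
  closure (range (fun y => y - T y)) = closure (D `&` Rg) ->
  closure (D `&` Rg) = closure D `&` closure Rg ->
  [/\ (fun n => `|resolvent A (iter n T x) - resolvent A (iter n.+1 T x)| ^+ 2
              + `|resolvent (op_inv A) (iter n T x)
                  - resolvent (op_inv A) (iter n.+1 T x)| ^+ 2) @ \oo --> `|v| ^+ 2,
      `|v| ^+ 2 = `|vD| ^+ 2 + `|vR| ^+ 2,
      (fun n => resolvent A (iter n T x) - resolvent A (iter n.+1 T x)) @ \oo --> vR &
      (fun n => resolvent (op_inv A) (iter n T x)
                - resolvent (op_inv A) (iter n.+1 T x)) @ \oo --> vD].
Proof.
move=> Hip Amm Bmm T v D Rg vD vR H1 H2.
have Am := Amm.1.
pose y n := iter n T x.
pose a n := resolvent A (y n).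
pose b n := y n - a n.
pose c n := resolvent B (reflected A (y n)).
pose e n := reflected A (y n) - c n.
have hA : forall n, A (a n) (b n) := fun n => res_spec Hip (y n) Amm.
have hB : forall n, B (c n) (e n) := fun n => res_spec Hip _ Bmm.
have yS : forall n, y n.+1 = y n - a n + c n by [].
have binv : forall n, resolvent (op_inv A) (y n) = b n := fun n => res_inv Hip _ Amm.
pose da n := a n - a n.+1.
pose db n := b n - b n.+1.
pose dd n := y n - y n.+1.
have daR : forall n, Rg (da n).
  move=> n; exists (b n.+1), (e n); split; first by exists (a n.+1).
  split; first by exists (c n).
  apply: (vec_eq Hip); rewrite /da /b /e /reflected yS.
  ipexp Hip ip; ring.
have dbD : forall n, D (db n).
  move=> n; exists (a n.+1), (c n); split; first by exists (b n.+1).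
  split; first by exists (e n).
  apply: (vec_eq Hip); rewrite /db /b yS.
  ipexp Hip ip; ring.
have dsum : forall n, da n + db n = dd n.
  move=> n; apply: (vec_eq Hip); rewrite /da /db /dd /b.
  ipexp Hip ip; ring.
have mono : forall n, 0 <= ip (da n) (db n) := fun n => Am _ _ _ _ (hA n) (hA n.+1).
have cD : cvxset (closure D) := cvx_D Hip Amm Bmm.
have cR : cvxset (closure Rg) := cvx_R Hip Amm Bmm.
have [a0 [u0 hA0]] := graph_nonempty Hip Amm.
have [b0 [w0 hB0]] := graph_nonempty Hip Bmm.
have nD : closure D !=set0.
  exists (a0 - b0); apply: subset_closure; exists a0, b0; split; first by exists u0.
  by split; first by exists w0.
have nR : closure Rg !=set0.
  exists (u0 + w0); apply: subset_closure; exists u0, w0; split; first by exists a0.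
  by split; first by exists b0.
have [vD_in vD_min] := proj_spec Hip (@closed_closure _ D) cD nD.
have [vR_in vR_min] := proj_spec Hip (@closed_closure _ Rg) cR nR.
rewrite -/vD in vD_in vD_min; rewrite -/vR in vR_in vR_min.
have vD_char := proj_char Hip cD vD_in vD_min.
have vR_char := proj_char Hip cR vR_in vR_min.
pose Sv := closure (range (fun y => y - T y)).
have SvE : Sv = closure D `&` closure Rg by rewrite /Sv H1 H2.
have cSv : cvxset Sv.
  by rewrite SvE => p q t [hp1 hp2] [hq1 hq2] ht; split; [apply: cD | apply: cR].
have clSv : closed Sv by apply: closed_closure.
have inSv : forall n, Sv (dd n).
  by move=> n; apply: subset_closure; exists (y n).
have nSv : Sv !=set0 by exists (dd 0).
have [v_in v_min] := proj_spec Hip clSv cSv nSv.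
rewrite -/v in v_in v_min.
have hRA : forall x' u, A x' u -> ip (- vR) u <= ip vR w0 - `|vR| ^+ 2.
  move=> x' u h; have := vR_char (u + w0).
  have hR : Rg (u + w0).
    by exists u, w0; split; [exists x' | split; [exists b0|]].
  move=> /(_ (subset_closure hR)); rewrite (ipNl Hip) (ipDr Hip); lra.
have hRB : forall x' u, B x' u -> ip (- vR) u <= ip vR u0 - `|vR| ^+ 2.
  move=> x' u h; have := vR_char (u0 + u).
  have hR : Rg (u0 + u).
    by exists u0, u; split; [exists a0 | split; [exists x'|]].
  move=> /(_ (subset_closure hR)); rewrite (ipNl Hip) (ipDr Hip); lra.
have hDB : forall u x', op_inv B u x' -> ip vD x' <= ip vD a0 - `|vD| ^+ 2.
  move=> u x' h; have := vD_char (a0 - x').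
  have hD : D (a0 - x').
    by exists a0, x'; split; [exists u0 | split; [exists u|]].
  move=> /(_ (subset_closure hD)); rewrite (ipBr Hip); lra.
have F1 : closure D (vD + - vR).
  apply: (cl_shift Hip vD_in) => s [a' [b' [[u' ha'] [hb' ->]]]].
  have -> : a' - b' + - vR = (a' + - vR) - b'.
    by apply: (vec_eq Hip); ipexp Hip ip; ring.
  apply: (closure_diff Hip); first exact (rec_dom Hip Amm hRA ha').
  exact: subset_closure.
have F2 : closure D (vD + vR).
  apply: (cl_shift Hip vD_in) => s [a' [b' [ha' [[w' hb'] ->]]]].
  have -> : a' - b' + vR = a' - (b' + - vR).
    by apply: (vec_eq Hip); ipexp Hip ip; ring.
  apply: (closure_diff Hip); first exact: subset_closure.
  exact (rec_dom Hip Bmm hRB hb').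
have F3 : closure Rg (vR + vD).
  apply: (cl_shift Hip vR_in) => s [ua [ub [hua [[xb hub] ->]]]].
  have -> : ua + ub + vD = ua + (ub + vD).
    by apply: (vec_eq Hip); ipexp Hip ip; ring.
  apply: closure_sum; first exact: subset_closure.
  exact (rec_dom Hip (op_inv_mm Hip Bmm) hDB (hub : op_inv B ub xb)).
have hvDR : ip vD vR <= 0.
  have := vD_char _ F1; rewrite (ipDr Hip) (ipNr Hip) (ipxx Hip); lra.
have Sv_sum : Sv (vD + vR) by rewrite SvE; split => //; rewrite addrC.
have vsum : `|v| ^+ 2 <= `|vD| ^+ 2 + `|vR| ^+ 2.
  have h := v_min _ Sv_sum.
  have h2 : `|v| ^+ 2 <= `|vD + vR| ^+ 2.
    by rewrite ler_pXn2r ?nnegrE.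
  move: h2 hvDR; rewrite -!(ipxx Hip); ipexp Hip ip.
  move=> *; lra.
have i1 : forall n, `|vR| <= `|da n| := fun n => vR_min _ (subset_closure (daR n)).
have i2 : forall n, `|vD| <= `|db n| := fun n => vD_min _ (subset_closure (dbD n)).
have i1' : forall n, `|vR| ^+ 2 <= ip vR (da n) := fun n => vR_char _ (subset_closure (daR n)).
have i2' : forall n, `|vD| ^+ 2 <= ip vD (db n) := fun n => vD_char _ (subset_closure (dbD n)).
have Qb : forall n, `|vR - da n| ^+ 2 + `|vD - db n| ^+ 2 <= `|dd n| ^+ 2 - `|v| ^+ 2.
  move=> n; have := i1' n; have := i2' n; have := mono n; have := vsum.
  rewrite -(dsum n) -!(ipxx Hip); ipexp Hip ip; move=> *; lra.
have Sb : forall n, `|v| ^+ 2 <= `|da n| ^+ 2 + `|db n| ^+ 2 <= `|dd n| ^+ 2.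
  move=> n; apply/andP; split.
    have h1 : `|vR| ^+ 2 <= `|da n| ^+ 2 by rewrite ler_pXn2r ?nnegrE.
    have h2 : `|vD| ^+ 2 <= `|db n| ^+ 2 by rewrite ler_pXn2r ?nnegrE.
    lra.
  have := mono n; rewrite -(dsum n) -!(ipxx Hip); ipexp Hip ip; move=> *; lra.
have near : forall eps : R, 0 < eps -> exists N, forall n, (N <= n)%N -> `|dd n| <= `|v| + eps.
  move=> eps e0.
  have e20 : 0 < eps / 2 by rewrite divr_gt0.
  have [s [[y' _ <-] hs]] := (closureP_norm _ v).1 v_in _ e20.
  have [N HN] := pazy (fun p q => T_firm Hip p q Amm Bmm) x y' e20.
  exists N => n hn; have := HN n hn.
  have : `|y' - T y'| <= `|v| + `|v - (y' - T y')|.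
    by have := ler_normD v (- (v - (y' - T y'))); rewrite normrN opprB addrC subrK.
  rewrite /dd /y; lra.
have sq2 : forall n, `|vD| ^+ 2 + `|vR| ^+ 2 <= `|dd n| ^+ 2.
  move=> n.
  have h1 : `|vR| ^+ 2 <= `|da n| ^+ 2 by rewrite ler_pXn2r ?nnegrE.
  have h2 : `|vD| ^+ 2 <= `|db n| ^+ 2 by rewrite ler_pXn2r ?nnegrE.
  have := Sb n => /andP [_ h3]; lra.
have ddsq : forall eps : R, 0 < eps -> exists N, forall n, (N <= n)%N ->
    `|dd n| ^+ 2 <= `|v| ^+ 2 + eps * (2 * `|v| + 1) /\ (eps <= 1 -> `|dd n| ^+ 2 <= (`|v| + eps) ^+ 2).
  move=> eps e0.
  have [N HN] := near (Num.min eps 1) ltac:(by rewrite lt_min e0 ltr01).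
  exists N => n hn; have h := HN n hn.
  have hm1 : Num.min eps 1 <= eps by rewrite ge_min lexx.
  have hm2 : Num.min eps 1 <= 1 by rewrite ge_min lexx orbT.
  have hm0 : 0 < Num.min eps 1 by rewrite lt_min e0 ltr01.
  have hv := normr_ge0 v; have hd := normr_ge0 (dd n).
  move: h hm1 hm2 hm0 hv hd; move: (Num.min eps 1) => m h hm1 hm2 hm0 hv hd.
  split; first by nra.
  move=> e1; nra.
have veq : `|v| ^+ 2 = `|vD| ^+ 2 + `|vR| ^+ 2.
  apply/le_anti; rewrite vsum /=.
  apply: sq_lim => // eps e0 e1.
  have [N HN] := ddsq eps e0.
  have := (HN N (leqnn N)).2 e1; have := sq2 N; lra.
split => //.
- apply: cvg_from => eta eta0.
  have [lam [/andP [l0 l1] hl]] := small_lam eta0 (ltac:(by rewrite addr_ge0 ?mulr_ge0) : 0 <= 2 * `|v| + 1).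
  have [N HN] := ddsq lam l0.
  exists N => n hn.
  have -> : `|resolvent A (iter n T x) - resolvent A (iter n.+1 T x)| ^+ 2 +
     `|resolvent (op_inv A) (iter n T x) - resolvent (op_inv A) (iter n.+1 T x)| ^+ 2
     = `|da n| ^+ 2 + `|db n| ^+ 2.
    by rewrite /db -(binv n) -(binv n.+1).
  have := (HN n hn).1; have := Sb n => /andP [h1 h2] h3.
  rewrite ler0_norm; last lra.
  lra.
- apply: cvg_from => eta eta0.
  have eta20 : 0 < eta ^+ 2 by rewrite exprn_gt0.
  have [lam [/andP [l0 l1] hl]] := small_lam eta20 (ltac:(by rewrite addr_ge0 ?mulr_ge0) : 0 <= 2 * `|v| + 1).
  have [N HN] := ddsq lam l0.
  exists N => n hn.
  have -> : resolvent A (iter n T x) - resolvent A (iter n.+1 T x) = da n by [].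
  have := (HN n hn).1; have := Qb n => h1 h2.
  have h3 := sqr_ge0 `|vD - db n|.
  have h4 : `|vR - da n| ^+ 2 < eta ^+ 2 by lra.
  have := normr_ge0 (vR - da n); move: h4; move: (`|vR - da n|) => r; nra.
- apply: cvg_from => eta eta0.
  have eta20 : 0 < eta ^+ 2 by rewrite exprn_gt0.
  have [lam [/andP [l0 l1] hl]] := small_lam eta20 (ltac:(by rewrite addr_ge0 ?mulr_ge0) : 0 <= 2 * `|v| + 1).
  have [N HN] := ddsq lam l0.
  exists N => n hn.
  have -> : resolvent (op_inv A) (iter n T x) - resolvent (op_inv A) (iter n.+1 T x) = db n.
    by rewrite /db -(binv n) -(binv n.+1).
  have := (HN n hn).1; have := Qb n => h1 h2.
  have h3 := sqr_ge0 `|vR - da n|.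
  have h4 : `|vD - db n| ^+ 2 < eta ^+ 2 by lra.
  have := normr_ge0 (vD - db n); move: h4; move: (`|vD - db n|) => r; nra.
Qed.
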